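(* Consider a complete 4-node network with nodes $A,B,C,D$, where for each ordered pair of distinct nodes $(X,Y)$ the directed link $XY$ has capacity $XY>0$. Define \[ I^*=\min\{BA+CA,BA+DA,CA+DA,AB+CB,AB+DB,CB+DB,AC+BC,AC+DC,BC+DC,AD+BD,AD+CD,BD+CD\}, \] i.e., the minimum, over all nodes, of the sum of the capacities of any two distinct incoming links to that node. For an unordered pair $\{X,Y\}$ write $\widehat{XY}=XY+YX$. Then for any positive value $R<I^*$, at least three of $\widehat{AB},\widehat{AC},\widehat{AD},\widehat{BC},\widehat{BD},\widehat{CD}$ are strictly greater than $R$.
   Context: Here $XY$ denotes the capacity (maximum number of bits per unit time) of the directed link from node $X$ to node $Y$. *)

(* Defs.v *)
From Stdlib Require Import Reals List.
Import ListNotations.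
Open Scope R_scope.

Definition list_min (x : R) (l : list R) : R := fold_right Rmin x l.

Fixpoint count_gt (r : R) (l : list R) : nat :=
  match l with
  | [] => 0%nat
  | x :: t => ((if Rlt_dec r x then 1 else 0) + count_gt r t)%nat
  end.

Definition Istar (AB AC AD BA BC BD CA CB CD DA DB DC : R) : R :=
  list_min (BA + CA)
    [BA + DA; CA + DA; AB + CB; AB + DB; CB + DB;
     AC + BC; AC + DC; BC + DC; AD + BD; AD + CD; BD + CD].

(* Main.v *)
Require Import Defs.
From Stdlib Require Import Reals List Lra Lia.
Import ListNotations.
Open Scope R_scope.

Lemma lt_min_split (r a b : R) : r < Rmin a b -> r < a /\ r < b.
Proof. intros H. split; eapply Rlt_le_trans; eauto; [apply Rmin_l | apply Rmin_r]. Qed.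

Theorem theorem2 (AB AC AD BA BC BD CA CB CD DA DB DC Rt : R) :
  0 < AB -> 0 < AC -> 0 < AD -> 0 < BA -> 0 < BC -> 0 < BD ->
  0 < CA -> 0 < CB -> 0 < CD -> 0 < DA -> 0 < DB -> 0 < DC ->
  0 < Rt -> Rt < Istar AB AC AD BA BC BD CA CB CD DA DB DC ->
  le 3 (count_gt Rt [AB + BA; AC + CA; AD + DA; BC + CB; BD + DB; CD + DC]).
Proof.
  intros. unfold Istar, list_min in *. simpl in *.
  repeat match goal with
  | H : Rt < Rmin _ _ |- _ => apply lt_min_split in H; destruct H
  end.
  simpl.
  repeat (destruct (Rlt_dec _ _)); simpl; try lia; exfalso; lra.
Qed.
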